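(* Let $T>0$, let $V>0$ and $R\ge 2V$ be constants, and let $H:[0,T]\times\mathbb R^{D_{L-1}}\times\mathbb R^{D_L}\to\mathbb R^{D_{L-1}}$ be continuous and such that: (1) $|H|\le V$ everywhere; (2) for each fixed $t\in[0,T]$ and $a^{(L-1)}\in\mathbb R^{D_{L-1}}$, the map $a^{(L)}\mapsto H(t,a^{(L-1)},a^{(L)})$ is $Ve^{Rt}$-Lipschitz; (3) for each fixed $t\in[0,T]$ and $a^{(L)}\in\mathbb R^{D_L}$, the map $a^{(L-1)}\mapsto H(t,a^{(L-1)},a^{(L)})$ is $V$-Lipschitz. For $a=(a^{(L-1)},a^{(L)})$ let $G(a)\in C([0,T],\mathbb R^{D_{L-1}})$ be the solution of $x(0)=a^{(L-1)}$, $x'(t)=H(t,x(t),a^{(L)})$, $t\in[0,T]$. Then $G$ is an $R$-special function.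
   Context: Here $D_{L-1},D_L\ge1$ are integers. A map $F:\mathbb R^{D_{L-1}}\times\mathbb R^{D_L}\to C([0,T],\mathbb R^{D_{L-1}})$ is $R$-special if (1) for each $a=(a^{(L-1)},a^{(L)})$, $t\mapsto F(a)(t)$ is $R$-Lipschitz and $F(a)(0)=a^{(L-1)}$; and (2) for each $t\in[0,T]$, the map $a\mapsto F(a)(t)$ is $e^{Rt}$-Lipschitz (Euclidean norms). *)

(* Defs.v *)
From HB Require Import structures.
From mathcomp Require Import all_boot all_order all_algebra.
From mathcomp Require Import all_classical all_reals all_analysis.
Set Implicit Arguments. Unset Strict Implicit. Unset Printing Implicit Defensive.
Import Order.TTheory GRing.Theory Num.Theory.
Import numFieldNormedType.Exports.
Local Open Scope ring_scope.
Local Open Scope classical_set_scope.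

Definition enorm {K : realType} {n : nat} (v : 'rV[K]_n) : K :=
  Num.sqrt (\sum_(i < n) (v ord0 i) ^+ 2).

Definition enorm2 {K : realType} {n m : nat} (a : 'rV[K]_n * 'rV[K]_m) : K :=
  Num.sqrt (\sum_(i < n) (a.1 ord0 i) ^+ 2 + \sum_(j < m) (a.2 ord0 j) ^+ 2).

Definition Icc0 {K : realType} (T : K) : set K := [set t | 0 <= t <= T].

Definition is_solution {K : realType} {n m : nat} (T : K)
  (H : K -> 'rV[K]_n -> 'rV[K]_m -> 'rV[K]_n)
  (a1 : 'rV[K]_n) (a2 : 'rV[K]_m) (x : K -> 'rV[K]_n) : Prop :=
  x 0 = a1 /\
  {within Icc0 T, continuous x} /\
  (forall t, 0 < t < T -> is_derive t 1 x (H t (x t) a2)).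

(* R-special maps (F given as a curried function of a = (a1,a2), values
   considered on [0,T]). *)
Definition R_special {K : realType} {n m : nat} (T Rc : K)
  (F : 'rV[K]_n -> 'rV[K]_m -> K -> 'rV[K]_n) : Prop :=
  (forall a1 a2,
      F a1 a2 0 = a1 /\
      (forall s t, s \in Icc0 T -> t \in Icc0 T ->
         enorm (F a1 a2 s - F a1 a2 t) <= Rc * `|s - t|)) /\
  (forall t, t \in Icc0 T -> forall a1 a2 b1 b2,
      enorm (F a1 a2 t - F b1 b2 t) <= expR (Rc * t) * enorm2 (a1 - b1, a2 - b2)).

(* Main.v *)
Require Import Defs.
From HB Require Import structures.
From mathcomp Require Import all_boot all_order all_algebra.
From mathcomp Require Import all_classical all_reals all_analysis.
From mathcomp Require Import ring lra.
Import Order.TTheory GRing.Theory Num.Theory.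
Import numFieldNormedType.Exports.
Local Open Scope ring_scope.
Local Open Scope classical_set_scope.



Section Alg.
Context {K : realType} {n : nat}.
Implicit Types u v : 'rV[K]_n.

Definition sq u := \sum_(i < n) (u ord0 i) ^+ 2.
Definition dot u v := \sum_(i < n) u ord0 i * v ord0 i.

Lemma sq_ge0 u : 0 <= sq u.
Proof. by apply: sumr_ge0 => i _; rewrite sqr_ge0. Qed.

Lemma enormE u : enorm u = Num.sqrt (sq u).
Proof. by []. Qed.

Lemma enorm_ge0 u : 0 <= enorm u.
Proof. exact: sqrtr_ge0. Qed.

Lemma enorm_sqr u : enorm u ^+ 2 = sq u.
Proof. by rewrite sqr_sqrtr // sq_ge0. Qed.

Lemma sq0 u : sq u = 0 -> dot u u = 0 /\ forall v, dot u v = 0.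
Proof.
move=> /eqP; rewrite psumr_eq0 => [/allP H|i _]; last by rewrite sqr_ge0.
have ui i : u ord0 i = 0.
  by have /= := H i (mem_index_enum _); rewrite sqrf_eq0 => /eqP.
by split; [|move=> v]; apply: big1 => i _; rewrite ui mul0r.
Qed.

Lemma dotC u v : dot u v = dot v u.
Proof. by apply: eq_bigr => i _; rewrite mulrC. Qed.

Lemma cs u v : dot u v <= enorm u * enorm v.
Proof.
set A := enorm u; set B := enorm v.
have hA : sq u = A ^+ 2 by rewrite enorm_sqr.
have hB : sq v = B ^+ 2 by rewrite enorm_sqr.
have A0 : 0 <= A by apply: enorm_ge0.
have B0 : 0 <= B by apply: enorm_ge0.
have key : 0 <= B ^+ 2 * sq u - 2 * (A * B) * dot u v + A ^+ 2 * sq v.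
  have -> : B ^+ 2 * sq u - 2 * (A * B) * dot u v + A ^+ 2 * sq v =
     \sum_(i < n) (B * u ord0 i - A * v ord0 i) ^+ 2.
    rewrite /sq /dot !mulr_sumr -sumrN -!big_split /=.
    by apply: eq_bigr => i _; ring.
  by apply: sumr_ge0 => i _; rewrite sqr_ge0.
rewrite hA hB in key.
have [AB0|] := ltrP 0 (A * B).
  have : 0 <= (A * B) * (A * B - dot u v) by nra.
  by rewrite pmulr_rge0 // subr_ge0.
move=> ABle; have AB0 : A * B = 0 by apply/eqP; rewrite eq_le ABle mulr_ge0.
have /orP[/eqP Az|/eqP Bz] : (A == 0) || (B == 0) by rewrite -mulf_eq0 AB0.
  have := hA; rewrite Az expr0n /= => /sq0 [_ ->]; by rewrite mul0r.
have := hB; rewrite Bz expr0n /= => /sq0 [_ h]; by rewrite dotC h mulr0.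
Qed.

Lemma sqD u v : sq (u + v) = sq u + 2 * dot u v + sq v.
Proof.
rewrite /sq /dot mulr_sumr -!big_split /=; apply: eq_bigr => i _.
rewrite mxE; ring.
Qed.

Lemma enormD u v : enorm (u + v) <= enorm u + enorm v.
Proof.
rewrite [enorm (u + v)]enormE sqD.
have -> : enorm u + enorm v = Num.sqrt ((enorm u + enorm v) ^+ 2).
  by rewrite sqrtr_sqr ger0_norm // addr_ge0 // enorm_ge0.
rewrite ler_sqrt; last by rewrite sqr_ge0.
rewrite sqrrD !enorm_sqr lerD2r lerD2l -mulr_natl; have := cs u v; lra.
Qed.

Lemma sqN u : sq (- u) = sq u.
Proof. by apply: eq_bigr => i _; rewrite mxE sqrrN. Qed.

Lemma enormN u : enorm (- u) = enorm u.
Proof. by rewrite !enormE sqN. Qed.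

Lemma enormB u v : enorm (u - v) = enorm (v - u).
Proof. by rewrite -enormN opprB. Qed.

Lemma sq00 : sq (0 : 'rV[K]_n) = 0.
Proof. by apply: big1 => i _; rewrite mxE expr0n. Qed.

End Alg.



Section Der.
Context {K : realType} {n : nat}.

Definition Ne (eps : K) (v : 'rV[K]_n) := Num.sqrt (sq v + eps ^+ 2).

Lemma comp_derive (w : K -> 'rV[K]_n) (r : K) (dw : 'rV[K]_n) (i : 'I_n) :
  is_derive r 1 w dw -> is_derive r 1 (fun s => w s ord0 i) (dw ord0 i).
Proof.
move=> [dwr <-].
have hd := (derivable_mxP w r 1).1 dwr ord0 i.
apply: DeriveDef => //.
by rewrite derive_mx // mxE.
Qed.

Lemma sq_derive (w : K -> 'rV[K]_n) (r : K) (dw : 'rV[K]_n) :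
  is_derive r 1 w dw -> is_derive r 1 (fun s => sq (w s)) (2 * dot (w r) dw).
Proof.
move=> hw.
have -> : (fun s => sq (w s)) = \sum_(i < n) (fun s => (w s ord0 i) ^+ 2).
  by apply/funext => s; rewrite fct_sumE.
apply: is_derive_eq.
  apply: is_derive_sum => i.
  have -> : (fun s => w s ord0 i ^+ 2) = (fun s => w s ord0 i) ^+ 2.
    by rewrite exprfctE.
  exact: (is_deriveX 2 (comp_derive _ _ _ i hw)).
rewrite /dot mulr_sumr; apply: eq_bigr => i _.
rewrite /= expr1 /GRing.scale /=; ring.
Qed.

Lemma Ne_gt0 (eps : K) (v : 'rV[K]_n) : 0 < eps -> 0 < Ne eps v.
Proof.
move=> e0; rewrite sqrtr_gt0; have := sq_ge0 v.
have : 0 < eps ^+ 2 by rewrite exprn_gt0.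
lra.
Qed.

Lemma Ne_sqr (eps : K) (v : 'rV[K]_n) : Ne eps v ^+ 2 = sq v + eps ^+ 2.
Proof. rewrite sqr_sqrtr //; have := sq_ge0 v; have := sqr_ge0 eps; lra. Qed.

Lemma Ne_derive (eps : K) (w : K -> 'rV[K]_n) (r : K) (dw : 'rV[K]_n) : 0 < eps ->
  is_derive r 1 w dw ->
  is_derive r 1 (fun s => Ne eps (w s)) (dot (w r) dw / Ne eps (w r)).
Proof.
move=> e0 hw.
have h1 : is_derive r 1 (fun s => sq (w s) + eps ^+ 2) (2 * dot (w r) dw).
  apply: is_derive_eq.
    apply: is_deriveD; first exact: sq_derive hw.
  by rewrite addr0.
have hpos : 0 < sq (w r) + eps ^+ 2.
  have := sq_ge0 (w r); have : 0 < eps ^+ 2 by rewrite exprn_gt0.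
  lra.
have := @is_derive1_comp K Num.sqrt (fun s => sq (w s) + eps ^+ 2) r _ _ (is_derive1_sqrt hpos) h1.
move=> h2.
have -> : (fun s => Ne eps (w s)) = Num.sqrt \o (fun s => sq (w s) + eps ^+ 2) by [].
apply: (is_derive_eq h2).
rewrite /Ne; have := Ne_gt0 _ (w r) e0; rewrite /Ne => hN.
field; exact: lt0r_neq0.
Qed.

Lemma enorm_le_Ne (eps : K) (v : 'rV[K]_n) : enorm v <= Ne eps v.
Proof. by rewrite /Ne enormE ler_sqrt ?lerDl ?sqr_ge0 //; have := sq_ge0 v; have := sqr_ge0 eps; lra. Qed.

Lemma Ne_der_le (eps : K) (v dv : 'rV[K]_n) : 0 < eps ->
  dot v dv / Ne eps v <= enorm dv.
Proof.
move=> e0; have hN := Ne_gt0 _ v e0.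
rewrite ler_pdivrMr //.
apply: (le_trans (cs v dv)).
rewrite [X in _ <= X]mulrC ler_wpM2r ?enorm_ge0 //.
exact: enorm_le_Ne.
Qed.


Lemma Ne_le (eps : K) (v : 'rV[K]_n) : 0 <= eps -> Ne eps v <= enorm v + eps.
Proof.
move=> e0.
have h : 0 <= enorm v + eps by have := enorm_ge0 v; lra.
rewrite -(ger0_norm h) -sqrtr_sqr /Ne ler_sqrt; last by rewrite sqr_ge0.
rewrite sqrrD enorm_sqr; have := enorm_ge0 v; nra.
Qed.

Lemma Ne0 (eps : K) : 0 <= eps -> Ne eps 0 = eps.
Proof. by move=> e0; rewrite /Ne sq00 add0r sqrtr_sqr ger0_norm. Qed.

Lemma sq_cont : continuous (fun x : 'rV[K]_n => sq x).
Proof.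
rewrite /sq.
apply: (@continuous_big _ _ +%R 0 xpredT); first exact: add_continuous.
move=> i _ u.
have -> : (fun x : 'rV[K]_n => x ord0 i ^+ 2) = (fun x : 'rV[K]_n => x ord0 i) * (fun x : 'rV[K]_n => x ord0 i).
  by apply/funext => x; rewrite expr2.
apply: continuousM; exact: coord_continuous.
Qed.

Lemma Ne_cont (eps : K) : continuous (Ne eps).
Proof.
move=> v; apply: continuous_comp; last exact: sqrt_continuous.
apply: (@continuousD _ _ _ (fun x => sq x) (fun _ => eps ^+ 2)).
  exact: sq_cont.
exact: cst_continuous.
Qed.

End Der.



Section Mono.
Context {K : realType}.

Lemma mono (f df : K -> K) (a b : K) : a <= b ->
  (forall x, x \in `]a, b[%R -> is_derive x 1 f (df x)) ->
  (forall x, x \in `]a, b[%R -> df x <= 0) ->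
  {within `[a, b], continuous f} -> f b <= f a.
Proof.
move=> ab hd hle hc.
case: (ltgtP a b) ab => // [altb|->] _; last by [].
have [c cab hc'] := MVT altb hd hc.
have := hle c cab; have : 0 < b - a by rewrite subr_gt0.
nra.
Qed.

Lemma der_cont (f : K -> K) : (forall r, derivable f r 1) -> continuous f.
Proof. by move=> h r; exact/differentiable_continuous/derivable1_diffP. Qed.

Lemma is_derive_lin (c r : K) : is_derive r 1 (fun s : K => c * s) c.
Proof.
have -> : (fun s : K => c * s) = c *: (@id K) by apply/funext => s.
apply: (is_derive_eq (is_deriveZ c (is_derive_id r 1))).
by rewrite /GRing.scale /= mulr1.
Qed.

Lemma is_derive_expc (c r : K) : is_derive r 1 (fun s : K => expR (c * s)) (c * expR (c * r)).
Proof.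
have h := @is_derive1_comp K expR (fun s => c * s) r _ _ (is_derive_expR (c * r)) (is_derive_lin c r).
have -> : (fun s : K => expR (c * s)) = expR \o (fun s => c * s) by [].
by apply: (is_derive_eq h); rewrite mulrC.
Qed.

Lemma cont_expc (c : K) : continuous (fun s : K => expR (c * s)).
Proof. apply: der_cont => r; by have [] := is_derive_expc c r. Qed.

Lemma cont_lin (c : K) : continuous (fun s : K => c * s).
Proof. apply: der_cont => r; by have [] := is_derive_lin c r. Qed.

End Mono.



Section Parts.
Context {K : realType} {n : nat}.

Lemma part1 (x dx : K -> 'rV[K]_n) (V s t : K) : s <= t ->
  {within `[s, t], continuous x} ->
  (forall r, r \in `]s, t[%R -> is_derive r 1 x (dx r)) ->
  (forall r, r \in `]s, t[%R -> enorm (dx r) <= V) ->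
  enorm (x t - x s) <= V * (t - s).
Proof.
move=> st hc hd hb.
apply/ler_addgt0Pr => e e0.
pose f r := Ne e (x r - x s) - V * r.
have hw : forall r, r \in `]s, t[%R -> is_derive r 1 (fun r => x r - x s) (dx r).
  move=> r hr.
  exact: (is_derive_eq (is_deriveB (hd r hr) (is_derive_cst (x s) r 1)) (subr0 _)).
have hm : f t <= f s.
apply: (@mono K f (fun r => dot (x r - x s) (dx r) / Ne e (x r - x s) - V) s t st).
- move=> r hr; apply: is_deriveB; last exact: is_derive_lin.
  exact: (Ne_derive _ _ _ _ e0 (hw r hr)).
- move=> r hr; have := Ne_der_le e (x r - x s) (dx r) e0; have := hb r hr; lra.
- move=> r; apply: (@continuousB _ _ (subspace `[s, t]) (fun r => Ne e (x r - x s)) (fun r => V * r)).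
    apply: (@continuous_comp (subspace `[s, t]) _ _ (fun r => x r - x s) (Ne e)); last exact: Ne_cont.
    apply: (@continuousB _ _ (subspace `[s, t]) x (fun _ => x s)); first exact: hc.
    exact: cst_continuous.
  exact: (continuous_subspaceT (cont_lin V)).
move: hm; rewrite /f subrr Ne0; last exact: ltW.
have := enorm_le_Ne e (x t - x s); lra.
Qed.

Lemma part2 (w dw : K -> 'rV[K]_n) (V Rc t d1 d2 : K) :
  0 < V -> 2 * V <= Rc -> 0 <= t -> 0 <= d2 ->
  {within `[0, t], continuous w} ->
  (forall r, r \in `]0, t[%R -> is_derive r 1 w (dw r)) ->
  (forall r, r \in `]0, t[%R ->
     enorm (dw r) <= V * enorm (w r) + V * expR (Rc * r) * d2) ->
  enorm (w 0) <= d1 ->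
  enorm (w t) <= expR (V * t) * d1 + (expR (Rc * t) - expR (V * t)) * d2.
Proof.
move=> V0 VR t0 d20 hc hd hb hw0.
apply/ler_addgt0Pr => e e0.
set E := expR (V * t).
have E0 : 0 < E := expR_gt0 _.
set eps := e / E.
have eps0 : 0 < eps by rewrite divr_gt0.
pose f r := expR (- V * r) * Ne eps (w r) - d2 * expR ((Rc - V) * r).
pose df r := expR (- V * r) * (dot (w r) (dw r) / Ne eps (w r))
   + Ne eps (w r) * (- V * expR (- V * r)) - d2 * ((Rc - V) * expR ((Rc - V) * r)).
have hm : f t <= f 0.
apply: (@mono K f df 0 t t0).
- move=> r hr.
  have h1 := is_deriveM (is_derive_expc (- V) r) (Ne_derive _ _ _ _ eps0 (hd r hr)).
  have h2 := is_deriveZ d2 (is_derive_expc (Rc - V) r).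
  have h3 := is_deriveB h1 h2.
  have -> : f = (fun s => expR (- V * s)) * (fun s => Ne eps (w s))
                - d2 *: (fun s => expR ((Rc - V) * s)) by apply/funext.
  by apply: (is_derive_eq h3).
- move=> r hr.
  have hD := Ne_der_le eps (w r) (dw r) eps0.
  have hB := hb r hr.
  have hN := enorm_le_Ne eps (w r).
  have Ex0 : 0 < expR (- V * r) := expR_gt0 _.
  have X0 : 0 < expR (Rc * r) := expR_gt0 _.
  have eY : expR (- V * r) * expR (Rc * r) = expR ((Rc - V) * r).
    by rewrite -expRD; congr expR; ring.
  rewrite /df.
  set Ex := expR (- V * r). set X := expR (Rc * r). set Y := expR ((Rc - V) * r).
  set N := Ne eps (w r). set Dq := dot (w r) (dw r) / N.
  have h4 : Ex * Dq <= Ex * (V * N + V * X * d2).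
    rewrite ler_wpM2l ?(ltW Ex0) //.
    apply: (le_trans hD); apply: (le_trans hB).
    by rewrite lerD2r ler_wpM2l ?(ltW V0).
  have h5 : 0 <= d2 * Y * (Rc - 2 * V).
    by rewrite mulr_ge0 ?mulr_ge0 ?subr_ge0 // ltW // expR_gt0.
  have h6 : Ex * (V * N + V * X * d2) = V * N * Ex + V * d2 * Y.
    by rewrite /Y /X /Ex -eY; ring.
  rewrite h6 in h4.
  nra.
- move=> r.
  apply: (@continuousB _ _ (subspace `[0, t])
     (fun r => expR (- V * r) * Ne eps (w r)) (fun r => d2 * expR ((Rc - V) * r))).
    apply: (@continuousM _ (subspace `[0, t]) (fun r => expR (- V * r)) (fun r => Ne eps (w r))).
      exact: (continuous_subspaceT (cont_expc (- V))).
    apply: (@continuous_comp (subspace `[0, t]) _ _ w (Ne eps)); last exact: Ne_cont.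
    exact: hc.
  apply: (@continuousM _ (subspace `[0, t]) (fun _ => d2) (fun r => expR ((Rc - V) * r))).
    exact: cst_continuous.
  exact: (continuous_subspaceT (cont_expc (Rc - V))).
move: hm; rewrite /f !mulr0 expR0 !mul1r mulr1.
have hN0 := Ne_le eps (w 0) (ltW eps0).
have hNt := enorm_le_Ne eps (w t).
have e1 : E * expR (- V * t) = 1 by rewrite -expRD -expR0; congr expR; ring.
have e2 : E * expR ((Rc - V) * t) = expR (Rc * t) by rewrite -expRD; congr expR; ring.
have e3 : E * eps = e by rewrite /eps mulrC divfK // gt_eqF.
move=> hm.
have := ler_wpM2l (ltW E0) hm.
rewrite mulrBr mulrA e1 mul1r mulrA [E * d2]mulrC -mulrA e2 => h.
have h' : E * (Ne eps (w 0) - d2) <= E * (d1 + eps - d2).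
  by rewrite ler_wpM2l ?(ltW E0) //; lra.
rewrite !mulrBr mulrDr e3 in h'.
rewrite mulrBr in h.
lra.
Qed.

End Parts.



Lemma final_ineq {K : realType} (E X d1 d2 : K) : 0 < E -> E <= X -> 0 <= d1 -> 0 <= d2 ->
  E * d1 + (X - E) * d2 <= X * Num.sqrt (d1 ^+ 2 + d2 ^+ 2).
Proof.
move=> E0 EX d10 d20.
have hpos : 0 <= d1 ^+ 2 + d2 ^+ 2 by rewrite addr_ge0 ?sqr_ge0.
set S := Num.sqrt _.
have S0 : 0 <= S by apply: sqrtr_ge0.
have hS : S ^+ 2 = d1 ^+ 2 + d2 ^+ 2 by rewrite sqr_sqrtr.
have L0 : 0 <= E * d1 + (X - E) * d2.
  by rewrite addr_ge0 ?mulr_ge0 ?subr_ge0 // ltW.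
have XS0 : 0 <= X * S by rewrite mulr_ge0 // (le_trans (ltW E0)).
have key : (E * d1 + (X - E) * d2) ^+ 2 <= (X * S) ^+ 2.
  rewrite exprMn hS.
  have h1 : 0 <= (X - E) * E * (d1 - d2) ^+ 2 by rewrite mulr_ge0 ?sqr_ge0 ?mulr_ge0 ?subr_ge0 // ltW.
  have h2 : 0 <= X * (X - E) * d1 ^+ 2 by rewrite mulr_ge0 ?sqr_ge0 ?mulr_ge0 ?subr_ge0 // (le_trans (ltW E0)).
  have h3 : 0 <= E * X * d2 ^+ 2 by rewrite mulr_ge0 ?sqr_ge0 ?mulr_ge0 // ?(ltW E0) // (le_trans (ltW E0)).
  nra.
have := ler_sqrt ((E * d1 + (X - E) * d2) ^+ 2) (sqr_ge0 (X * S)).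
rewrite !sqrtr_sqr !ger0_norm // key => h.
by rewrite h.
Qed.

Theorem proposition8p8 (K : realType) (d1 d2 : nat) (T V Rc : K)
  (H : K -> 'rV[K]_d1 -> 'rV[K]_d2 -> 'rV[K]_d1)
  (G : 'rV[K]_d1 -> 'rV[K]_d2 -> K -> 'rV[K]_d1) :
  (0 < d1)%N -> (0 < d2)%N ->
  0 < T -> 0 < V -> 2 * V <= Rc ->
  {within [set p : K * ('rV[K]_d1 * 'rV[K]_d2) | 0 <= p.1 <= T],
     continuous (fun p => H p.1 p.2.1 p.2.2)} ->
  (forall t a1 a2, 0 <= t <= T -> enorm (H t a1 a2) <= V) ->
  (forall t a1, 0 <= t <= T -> forall a2 b2,
     enorm (H t a1 a2 - H t a1 b2) <= V * expR (Rc * t) * enorm (a2 - b2)) ->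
  (forall t a2, 0 <= t <= T -> forall a1 b1,
     enorm (H t a1 a2 - H t b1 a2) <= V * enorm (a1 - b1)) ->
  (forall a1 a2, is_solution T H a1 a2 (G a1 a2)) ->
  R_special T Rc G.
Proof.
move=> _ _ T0 V0 VR _ hB hL2 hL1 hsol.
have VRc : V <= Rc by lra.
have sub : forall s t, 0 <= s -> t <= T -> `[s, t] `<=` Icc0 T.
  move=> s t s0 tT r /=; rewrite in_itv /= => /andP[sr rt].
  rewrite /Icc0 /=; apply/andP; split; lra.
have lip : forall a1 a2 s t, 0 <= s -> s <= t -> t <= T ->
    enorm (G a1 a2 t - G a1 a2 s) <= V * (t - s).
  move=> a1 a2 s t s0 st tT.
  have [_ [hc hd]] := hsol a1 a2.
  apply: (@part1 K d1 (G a1 a2) (fun r => H r (G a1 a2 r) a2) V s t st).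
  - exact: (continuous_subspaceW (sub s t s0 tT) hc).
  - move=> r; rewrite in_itv /= => /andP[sr rt]; apply: hd.
    apply/andP; split; lra.
  - move=> r; rewrite in_itv /= => /andP[sr rt]; apply: hB.
    apply/andP; split; lra.
split.
  move=> a1 a2; split; first by have [] := hsol a1 a2.
  move=> s t /set_mem /= /andP[s0 sT] /set_mem /= /andP[t0 tT].
  have [st|ts] := lerP s t.
    rewrite enormB (le_trans (lip a1 a2 s t s0 st tT)) //.
    by rewrite ler_wpM2r // subr_ge0.
  rewrite (le_trans (lip a1 a2 t s t0 (ltW ts) sT)) //.
  by rewrite ler_wpM2r // subr_ge0 ltW.
move=> t /set_mem /= /andP[t0 tT] a1 a2 b1 b2.
have [x0 [hcx hdx]] := hsol a1 a2.
have [y0 [hcy hdy]] := hsol b1 b2.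
set x := G a1 a2. set y := G b1 b2.
have h := @part2 K d1 (fun r => x r - y r)
  (fun r => H r (x r) a2 - H r (y r) b2) V Rc t (enorm (a1 - b1)) (enorm (a2 - b2))
  V0 VR t0 (enorm_ge0 _).
have sub0 := sub 0 t (lexx 0) tT.
have hfin : enorm (x t - y t) <= expR (V * t) * enorm (a1 - b1)
   + (expR (Rc * t) - expR (V * t)) * enorm (a2 - b2).
apply: (h (continuous_subspaceW sub0 (within_continuousB hcx hcy))).
- move=> r; rewrite in_itv /= => /andP[r0 rt].
  have hr : 0 < r < T by apply/andP; split; lra.
  exact: is_deriveB (hdx r hr) (hdy r hr).
- move=> r; rewrite in_itv /= => /andP[r0 rt].
  have hr : 0 <= r <= T by apply/andP; split; lra.
  have -> : H r (x r) a2 - H r (y r) b2 =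
     (H r (x r) a2 - H r (y r) a2) + (H r (y r) a2 - H r (y r) b2).
    by rewrite addrA subrK.
  apply: (le_trans (enormD _ _)); apply: lerD.
    exact: hL1.
  exact: hL2.
- by rewrite /x /y x0 y0.
apply: (le_trans hfin).
have E0 : 0 < expR (V * t) := expR_gt0 _.
have EX : expR (V * t) <= expR (Rc * t) by rewrite ler_expR ler_wpM2r.
have := final_ineq _ _ _ _ E0 EX (enorm_ge0 (a1 - b1)) (enorm_ge0 (a2 - b2)).
by rewrite !enorm_sqr.
Qed.
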